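(* Let $h:[0,\infty)\to[\frac{\beta u_0-1}{r},\frac{\beta u_0}{r}]$ be a decreasing solution to the HJB equation with $h'(0)=0$, and let $z_f\in(0,d]$, $z_g\in[d,\infty)$ be such that $h=\bar f$ on $[0,z_f]$ for some function $\bar f(z)=\frac{\beta u_0}{r}+A_2e^{\theta_1(u_0)z}+B_2e^{-\theta_2(u_0)z}$ and $h=\bar g$ on $(z_g,\infty)$ for some function $\bar g(z)=\frac{\beta u_0-1}{r}+a_2e^{\theta_1(u_0)z}+b_2e^{-\theta_2(u_0)z}$ (as provided by the structure result for such solutions). Then $$\bar f(z)=\frac{\beta u_0}{r}+A_2\Big(e^{\theta_1(u_0)z}+\frac{\theta_1(u_0)}{\theta_2(u_0)}e^{-\theta_2(u_0)z}\Big)\ (z\in[0,z_f]),\qquad \bar g(z)=\frac{\beta u_0-1}{r}+b_2e^{-\theta_2(u_0)z}\ (z>z_g).$$ In particular $\lim_{z\to\infty}h(z)=\frac{\beta u_0-1}{r}$.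
   Context: Fix $\mu\in\mathbb R$, $\sigma>0$, $u_0>0$, $r>0$, $\beta>0$, $d>0$. For $u\in[0,u_0]$ let $\theta_1(u)=\frac{\sqrt{(\mu-u)^2+2r\sigma^2}+(\mu-u)}{\sigma^2}$ and $\theta_2(u)=\frac{\sqrt{(\mu-u)^2+2r\sigma^2}-(\mu-u)}{\sigma^2}$. The HJB equation is $$-rh(z)-\mu h'(z)+\tfrac{\sigma^2}{2}h''(z)+\sup_{u\in[0,u_0]}\{(\beta+h'(z))u\}=\mathbf 1_{\{z>d\}}.$$ A solution to the HJB equation is a function $h:[0,\infty)\to[\frac{\beta u_0-1}{r},\frac{\beta u_0}{r}]$ that is continuously differentiable on $[0,\infty)$, twice continuously differentiable on $[0,d]$ and on $(d,\infty)$ respectively (with $h'(0),h''(0)$ the right derivatives and $h''(d)$ the left second derivative), and satisfies the HJB equation for all $z\ge0$. *)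

(* Defs.v *)
From Stdlib Require Import Reals Lra.
From Coquelicot Require Import Coquelicot.
Open Scope R_scope.

Definition theta1 (mu sigma r u : R) : R :=
  (sqrt ((mu - u)^2 + 2 * r * sigma^2) + (mu - u)) / sigma^2.
Definition theta2 (mu sigma r u : R) : R :=
  (sqrt ((mu - u)^2 + 2 * r * sigma^2) - (mu - u)) / sigma^2.

Definition rderiv (f : R -> R) (z l : R) : Prop :=
  filterlim (fun t => (f (z + t) - f z) / t) (at_right 0) (locally l).
Definition lderiv (f : R -> R) (z l : R) : Prop :=
  filterlim (fun t => (f (z + t) - f z) / t) (at_left 0) (locally l).

Definition cont_within (D : R -> Prop) (f : R -> R) (z : R) : Prop :=
  filterlim f (within D (locally z)) (locally (f z)).

(* h is a solution of the HJB equation, with h1 = h' (right derivative at 0)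
   and h2 = h'' (right derivative at 0, left second derivative at d). *)
Definition HJB_solution (mu sigma u0 r beta d : R) (h h1 h2 : R -> R) : Prop :=
  (forall z, 0 <= z -> (beta * u0 - 1) / r <= h z <= beta * u0 / r) /\
  rderiv h 0 (h1 0) /\
  (forall z, 0 < z -> is_derive h z (h1 z)) /\
  (forall z, 0 <= z -> cont_within (fun x => 0 <= x) h1 z) /\
  rderiv h1 0 (h2 0) /\
  (forall z, 0 < z < d -> is_derive h1 z (h2 z)) /\
  lderiv h1 d (h2 d) /\
  (forall z, 0 <= z <= d -> cont_within (fun x => 0 <= x <= d) h2 z) /\
  (forall z, d < z -> is_derive h1 z (h2 z)) /\
  (forall z, d < z -> continuous h2 z) /\
  (forall z, 0 <= z ->
     exists S,
       is_lub (fun y => exists u, 0 <= u <= u0 /\ y = (beta + h1 z) * u) S /\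
       - r * h z - mu * h1 z + sigma^2 / 2 * h2 z + S
         = (if Rlt_dec d z then 1 else 0)).

(* Main.v *)
Require Import Defs.
From Stdlib Require Import Reals Lra.
From Coquelicot Require Import Coquelicot.
Open Scope R_scope.

Lemma theta_pos (mu sigma r u : R) : 0 < sigma -> 0 < r ->
  0 < theta1 mu sigma r u /\ 0 < theta2 mu sigma r u.
Proof.
  intros Hs Hr. unfold theta1, theta2.
  set (x := mu - u).
  assert (Hsq : Rabs x < sqrt (x^2 + 2*r*sigma^2)).
  { rewrite <- sqrt_Rsqr_abs. apply sqrt_lt_1_alt. split.
    - apply Rle_0_sqr.
    - unfold Rsqr. assert (0 < 2*r*sigma^2) by (apply Rmult_lt_0_compat; [lra| apply pow_lt; lra]).
      simpl. lra. }
  assert (0 < sigma^2) by (apply pow_lt; lra).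
  pose proof (Rle_abs x). pose proof (Rle_abs (-x)). rewrite Rabs_Ropp in *.
  split; apply Rdiv_lt_0_compat; lra.
Qed.

Theorem lemma2p4 (mu sigma u0 r beta d : R)
  (Hsigma : 0 < sigma) (Hu0 : 0 < u0) (Hr : 0 < r) (Hbeta : 0 < beta) (Hd : 0 < d)
  (h h1 h2 : R -> R)
  (Hsol : HJB_solution mu sigma u0 r beta d h h1 h2)
  (Hdec : forall x y, 0 <= x -> x <= y -> h y <= h x)
  (Hh0 : h1 0 = 0)
  (zf zg A2 B2 a2 b2 : R)
  (Hzf : 0 < zf <= d) (Hzg : d <= zg)
  (Hf : forall z, 0 <= z <= zf ->
     h z = beta * u0 / r + A2 * exp (theta1 mu sigma r u0 * z)
                         + B2 * exp (- theta2 mu sigma r u0 * z))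
  (Hg : forall z, zg < z ->
     h z = (beta * u0 - 1) / r + a2 * exp (theta1 mu sigma r u0 * z)
                               + b2 * exp (- theta2 mu sigma r u0 * z)) :
  (forall z, 0 <= z <= zf ->
     beta * u0 / r + A2 * exp (theta1 mu sigma r u0 * z)
                   + B2 * exp (- theta2 mu sigma r u0 * z)
     = beta * u0 / r + A2 * (exp (theta1 mu sigma r u0 * z)
          + theta1 mu sigma r u0 / theta2 mu sigma r u0
            * exp (- theta2 mu sigma r u0 * z))) /\
  (forall z, zg < z ->
     (beta * u0 - 1) / r + a2 * exp (theta1 mu sigma r u0 * z)
                         + b2 * exp (- theta2 mu sigma r u0 * z)
     = (beta * u0 - 1) / r + b2 * exp (- theta2 mu sigma r u0 * z)) /\
  is_lim h p_infty ((beta * u0 - 1) / r).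
Proof.
  destruct (theta_pos mu sigma r u0 Hsigma Hr) as [Ht1 Ht2].
  set (t1 := theta1 mu sigma r u0) in *.
  set (t2 := theta2 mu sigma r u0) in *.
  destruct Hsol as [Hrange [Hrd _]].
  assert (HB : A2 * t1 - B2 * t2 = 0).
  { set (fb := fun z => beta * u0 / r + A2 * exp (t1 * z) + B2 * exp (- t2 * z)).
    assert (Hdf : is_derive fb 0 (A2 * t1 - B2 * t2)).
    { unfold fb. auto_derive; auto. rewrite !Rmult_0_r, ?Ropp_0, exp_0. ring. }
    apply is_derive_Reals in Hdf.
    set (l := A2 * t1 - B2 * t2) in *.
    destruct (Req_dec l 0) as [E|E]; [exact E|exfalso].
    assert (Hl : 0 < Rabs l / 2) by (pose proof (Rabs_pos_lt l E); lra).
    destruct (Hdf (Rabs l / 2) Hl) as [del Hdel].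
    unfold rderiv in Hrd. rewrite Hh0 in Hrd.
    pose proof (proj1 (@filterlim_locally R R_UniformSpace (at_right 0) _ _ 0) Hrd) as Hrd2; clear Hrd; rename Hrd2 into Hrd.
    destruct (Hrd (mkposreal _ Hl)) as [del2 Hdel2].
    set (t := Rmin (Rmin del del2) zf / 2).
    assert (Hm1 : Rmin (Rmin del del2) zf <= del) by
      (eapply Rle_trans; [apply Rmin_l| apply Rmin_l]).
    assert (Hm2 : Rmin (Rmin del del2) zf <= del2) by
      (eapply Rle_trans; [apply Rmin_l| apply Rmin_r]).
    assert (Hm3 : Rmin (Rmin del del2) zf <= zf) by apply Rmin_r.
    assert (Hm0 : 0 < Rmin (Rmin del del2) zf).
    { apply Rmin_pos; [apply Rmin_pos|]; try apply cond_pos; lra. }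
    assert (Htp : 0 < t) by (unfold t; lra).
    assert (Htz : t < zf) by (unfold t; lra).
    assert (Hq : (h (0 + t) - h 0) / t = (fb (0 + t) - fb 0) / t).
    { rewrite !Hf by lra. reflexivity. }
    assert (H1 : ball 0 (mkposreal _ Hl) ((h (0 + t) - h 0) / t)).
    { apply Hdel2; [|exact Htp].
      unfold ball; simpl; unfold AbsRing_ball, abs, minus, plus, opp; simpl.
      rewrite Ropp_0, Rplus_0_r, Rabs_right by lra. unfold t. lra. }
    assert (H2 := Hdel t ltac:(lra) ltac:(rewrite Rabs_right by lra; unfold t; lra)).
    rewrite <- Hq in H2.
    revert H1; unfold ball; simpl; unfold AbsRing_ball, abs, minus, plus, opp; simpl.
    rewrite Ropp_0, Rplus_0_r. intro H1.
    pose proof (Rabs_triang_inv l ((h (0 + t) - h 0) / t)).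
    rewrite Rabs_minus_sym in H2.
    pose proof (Rabs_triang_inv ((h (0 + t) - h 0) / t - l) ((h (0 + t) - h 0) / t)).
    replace ((h (0 + t) - h 0) / t - l - (h (0 + t) - h 0) / t) with (- l) in H0 by ring.
    rewrite Rabs_Ropp in H0. lra. }
  assert (Ha : a2 = 0).
  { destruct (Req_dec a2 0) as [E|E]; [exact E|exfalso].
    assert (Hpa := Rabs_pos_lt a2 E).
    set (M := 1 / r + Rabs b2).
    set (z := Rmax zg 0 + 1 + M / (Rabs a2 * t1)).
    assert (HM : 0 <= M) by (unfold M; pose proof (Rabs_pos b2);
      assert (0 < 1/r) by (apply Rdiv_lt_0_compat; lra); lra).
    assert (Hz0 : 0 < z).
    { unfold z. pose proof (Rmax_r zg 0).
      assert (0 <= M / (Rabs a2 * t1)) by (apply Rdiv_le_0_compat; [lra| apply Rmult_lt_0_compat; lra]). lra. }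
    assert (Hzz : zg < z).
    { unfold z. pose proof (Rmax_l zg 0).
      assert (0 <= M / (Rabs a2 * t1)) by (apply Rdiv_le_0_compat; [lra| apply Rmult_lt_0_compat; lra]). lra. }
    pose proof (Hrange z ltac:(lra)) as Hrz. rewrite (Hg z Hzz) in Hrz.
    assert (Hb : Rabs (b2 * exp (- t2 * z)) <= Rabs b2).
    { rewrite Rabs_mult, (Rabs_right (exp _)) by (left; apply exp_pos).
      rewrite <- Rmult_1_r. apply Rmult_le_compat_l; [apply Rabs_pos|].
      rewrite <- exp_0. apply Rlt_le, exp_increasing. assert (0 < t2 * z) by (apply Rmult_lt_0_compat; lra). lra. }
    assert (Hr1 : (beta * u0) / r - (beta * u0 - 1) / r = 1 / r) by (field; lra).
    assert (Hax : Rabs (a2 * exp (t1 * z)) <= M).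
    { replace (a2 * exp (t1 * z)) with
        ((a2 * exp (t1 * z) + b2 * exp (- t2 * z)) - b2 * exp (- t2 * z)) by ring.
      eapply Rle_trans; [apply Rabs_triang|]. rewrite Rabs_Ropp.
      unfold M. apply Rplus_le_compat; [|exact Hb].
      apply Rabs_le. lra. }
    rewrite Rabs_mult, (Rabs_right (exp _)) in Hax by (left; apply exp_pos).
    assert (He : 1 + t1 * z <= exp (t1 * z)).
    { destruct (Req_dec (t1*z) 0) as [E0|E0]; [rewrite E0, exp_0; lra|].
      left. apply exp_ineq1. exact E0. }
    assert (Hk : Rabs a2 * (1 + t1 * z) <= M).
    { eapply Rle_trans; [|exact Hax]. apply Rmult_le_compat_l; [lra|exact He]. }
    assert (Hk2 : M < Rabs a2 * t1 * z).
    { unfold z. pose proof (Rmax_r zg 0).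
      assert (Hpos : 0 < Rabs a2 * t1) by (apply Rmult_lt_0_compat; lra).
      replace (Rabs a2 * t1 * (Rmax zg 0 + 1 + M / (Rabs a2 * t1)))
        with (Rabs a2 * t1 * (Rmax zg 0 + 1) + M) by (field; lra).
      assert (0 < Rabs a2 * t1 * (Rmax zg 0 + 1)) by (apply Rmult_lt_0_compat; lra). lra. }
    nra. }
  split; [|split].
  - intros z _. assert (B2 = A2 * t1 / t2) by (apply (Rmult_eq_reg_r t2); [|lra]; field_simplify; lra).
    subst B2. field. lra.
  - intros z _. rewrite Ha. ring.
  - set (L := (beta * u0 - 1) / r).
    apply is_lim_ext_loc with (fun z => L + b2 * exp (- t2 * z)).
    { exists zg. intros z Hz. rewrite Hg by exact Hz. rewrite Ha. unfold L. ring. }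
    replace (Finite L) with (Finite (L + b2 * 0)) by (f_equal; ring).
    apply is_lim_plus'; [apply is_lim_const| ].
    change (Finite (b2 * 0)) with (Rbar_mult b2 0).
    apply is_lim_scal_l.
    apply is_lim_comp with m_infty.
    + apply is_lim_exp_m.
    + replace m_infty with (Rbar_mult (- t2) p_infty).
      * apply is_lim_scal_l. apply is_lim_id.
      * rewrite Rbar_mult_comm. simpl. case Rle_dec; [intro Hc; exfalso; clear -Ht2 Hc; lra|]. reflexivity.
    + exists 0. intros. discriminate.
Qed.
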